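(* Let $k\geq 1$ and $n\geq 0$ be integers, and let $m$ be an integer with $\lfloor n/(k+1)\rfloor \leq m \leq \lfloor n/k\rfloor$. Then \[ \sum_{i=0}^{n} f_i^{(k)} = \sum_{j=0}^{m} (-1)^{j} \binom{n-jk}{j}2^{n-j(k+1)}. \]
   Context: For an integer $k\geq 1$, the $k$-bonacci numbers $f_n^{(k)}$ ($n\in\mathbb{Z}$) are defined by $f_n^{(k)}=0$ for $n<0$, $f_0^{(k)}=1$, and $f_n^{(k)}=\sum_{i=1}^{k} f_{n-i}^{(k)}$ for $n\geq 1$. Here $\lfloor x\rfloor$ is the floor function, and $\binom{a}{b}=0$ when $0\le a<b$. *)

(* Defs.v *)
From mathcomp Require Import all_boot all_order all_algebra.
Set Implicit Arguments. Unset Strict Implicit. Unset Printing Implicit Defensive.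
Import Order.TTheory GRing.Theory Num.Theory.

(* kbon_list k n = [:: f_n; f_{n-1}; ...; f_0] (k-bonacci values, most recent first) *)
Fixpoint kbon_list (k n : nat) : seq nat :=
  match n with
  | 0 => [:: 1]
  | n'.+1 => let l := kbon_list k n' in sumn (take k l) :: l
  end.

(* k-bonacci number f_n^{(k)} for n >= 0: f_0 = 1, f_n = sum_{i=1}^k f_{n-i},
   with f_j = 0 for j < 0 (take k l = the k previous values, fewer near the start, i.e. missing ones = 0). *)
Definition kbonacci (k n : nat) : nat := head 0 (kbon_list k n).

(* Main.v *)
Require Import Defs.
From mathcomp Require Import all_boot all_order all_algebra.
From mathcomp Require Import zify ring.
Import Order.TTheory GRing.Theory Num.Theory.

Lemma drop_kbon k j p : drop j (kbon_list k p) = if (j <= p)%N then kbon_list k (p - j) else [::].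
Proof.
elim: j p => [|j IH] p.
  by rewrite drop0 subn0.
case: p => [|p] //=; by rewrite IH.
Qed.

Definition FF k n := (\sum_(0 <= i < n.+1) kbonacci k i)%N.

Lemma sumn_kbon k p : sumn (kbon_list k p) = FF k p.
Proof.
rewrite /FF; elim: p => [|p IH]; first by rewrite big_nat1.
by rewrite big_nat_recr //= -IH addnC.
Qed.

Lemma FF_rec k p : FF k p.+1 = (FF k p + kbonacci k p.+1)%N /\
  (kbonacci k p.+1 + (if (k <= p)%N then FF k (p - k) else 0) = FF k p)%N.
Proof.
split; first by rewrite /FF big_nat_recr.
rewrite /kbonacci /= -(sumn_kbon k p).
rewrite -{2}(cat_take_drop k (kbon_list k p)) sumn_cat.
rewrite drop_kbon. case: ifP => _; last by rewrite addn0.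
by rewrite sumn_kbon.
Qed.

Lemma bin_van n j k : (n < j * k.+1)%N -> 'C(n - j * k, j) = 0%N.
Proof. move=> h; apply: bin_small; rewrite mulnS in h; lia. Qed.

Lemma natId k p i :
  ('C(p.+1 - i.+1 * k, i.+1) * 2 ^ (p.+1 - i.+1 * k.+1) =
  2 * ('C(p - i.+1 * k, i.+1) * 2 ^ (p - i.+1 * k.+1)) +
  (if (k <= p)%N then 'C(p - k - i * k, i) * 2 ^ (p - k - i * k.+1) else 0))%N.
Proof.
have e1 : (i.+1 * k = i * k + k)%N by rewrite mulSn addnC.
have e2 : (i.+1 * k.+1 = i * k + k + i.+1)%N by rewrite mulSn mulnS; lia.
have e3 : (i * k.+1 = i * k + i)%N by rewrite mulnS; lia.
case: (ltngtP p.+1 (i.+1 * k.+1)) => h.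
- rewrite bin_van // bin_van ?muln0 ?add0n; last lia.
  case: ifP => // hk. by rewrite bin_van //; lia.
- have -> : (p.+1 - i.+1 * k.+1 = (p - i.+1 * k.+1).+1)%N by lia.
  have -> : (p.+1 - i.+1 * k = (p - i.+1 * k).+1)%N by lia.
  have hk : (k <= p)%N by lia.
  rewrite hk.
  have -> : (p - k - i * k = p - i.+1 * k)%N by lia.
  have -> : (p - k - i * k.+1 = (p - i.+1 * k.+1).+1)%N by lia.
  by rewrite binS !expnS; ring.
- have hk : (k <= p)%N by lia. rewrite hk.
  have -> : (p.+1 - i.+1 * k = i.+1)%N by lia.
  have -> : (p - i.+1 * k = i)%N by lia.
  have -> : (p - k - i * k = i)%N by lia.
  have -> : (p - k - i * k.+1 = 0)%N by lia.
  have -> : (p.+1 - i.+1 * k.+1 = 0)%N by lia.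
  by rewrite !binn bin_small ?muln0.
Qed.

Local Open Scope ring_scope.

Section R.
Variable k : nat.
Definition g (n j : nat) : rat := (-1) ^+ j * ('C(n - j * k, j))%:R * 2%:R ^+ (n - j * k.+1).
Definition G n := \sum_(0 <= j < (n %/ k.+1).+1) g n j.

Lemma g_van n j : (n < j * k.+1)%N -> g n j = 0.
Proof. by move=> h; rewrite /g bin_van // mulr0 mul0r. Qed.

Lemma sum_ext n B : (n %/ k.+1 < B)%N -> \sum_(0 <= j < B) g n j = G n.
Proof.
move=> hB; rewrite /G (big_cat_nat _ (n:=(n %/ k.+1).+1)) //=.
rewrite [X in _ + X]big1_seq ?addr0 // => j /andP[_]; rewrite mem_index_iota => /andP[h1 _].
apply: g_van; apply: leq_trans (ltn_ceil n (ltn0Sn k)) _; exact: leq_mul.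
Qed.

Lemma g_step p i : g p.+1 i.+1 = 2%:R * g p i.+1 - (if (k <= p)%N then g (p - k) i else 0).
Proof.
have H := natId k p i. move: H; rewrite /g.
case: ifP => hk H; rewrite -!mulrA -!natrX -!natrM H natrD ?addn0 ?subr0 natrM exprS; ring.
Qed.

Lemma G_step p : G p.+1 = 2%:R * G p - (if (k <= p)%N then G (p - k) else 0).
Proof.
rewrite -(@sum_ext p.+1 p.+2) ?ltnS ?leq_div2r // ?leq_div //.
rewrite big_nat_recl //.
under eq_bigr do rewrite g_step.
rewrite sumrB -mulr_sumr.
have E1 : G p = g p 0 + \sum_(0 <= i < p.+1) g p i.+1.
  by rewrite -(@sum_ext p p.+2) ?big_nat_recl // ltnS (leq_trans (leq_div _ _)).
rewrite E1.
have g0 : forall q, g q 0 = 2%:R ^+ q by move=> q; rewrite /g !mul0n !subn0 bin0 expr0 !mul1r.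
rewrite !g0.
case: ifP => hk.
  rewrite (@sum_ext (p - k) p.+1); last by rewrite ltnS; apply: leq_trans (leq_div _ _) (leq_subr _ _).
  rewrite exprS; ring.
rewrite big1_eq !subr0 exprS; ring.
Qed.
End R.

Lemma FG k n : (FF k n)%:R = G k n.
Proof.
elim/ltn_ind: n => n IH. case: n IH => [|p] IH.
  by rewrite /FF /G div0n !big_nat1 /g /kbonacci /= !mul0n !subn0 bin0 expr0.
have [e1 e2] := FF_rec k p.
rewrite G_step e1 natrD -(IH p) //.
have -> : (kbonacci k p.+1)%:R = (FF k p)%:R - (if (k <= p)%N then FF k (p - k) else 0%N)%:R :> rat.
  by rewrite -e2 natrD addrK.
case: ifP => hk; last by rewrite subr0; ring.
rewrite -(IH (p - k)%N); last by rewrite ltnS leq_subr.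
ring.
Qed.

Theorem corollary3p1 (k n m : nat) :
  (1 <= k)%N ->
  (n %/ k.+1 <= m)%N -> (m <= n %/ k)%N ->
  ((\sum_(0 <= i < n.+1) kbonacci k i)%:R : rat) =
  \sum_(0 <= j < m.+1)
     (-1) ^+ j * ('C(n - j * k, j))%:R
       * (2%:R : rat) ^ ((n%:Z) - (j * k.+1)%:Z).
Proof.
move=> _ hm _.
rewrite (FG k n) -(@sum_ext k n m.+1) ?ltnS //.
apply: eq_bigr => j _.
case: (leqP (j * k.+1) n) => h.
  by rewrite /g subzn.
by rewrite g_van // bin_van // mulr0 mul0r.
Qed.
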